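(* Let $\alpha>0$, $\delta>0$, $S\ge0$, $D>0$. Let $N_1,N_2\ge1$ and let $p_{i,k}$ ($i,k\in\{1,\dots,N_1\}$), $q_{j,k}$ ($j,k\in\{1,\dots,N_2\}$), $r_{i,k}$ ($i\in\{1,\dots,N_1\},k\in\{1,\dots,N_2\}$) be continuous real functions of $t\ge0$ with $p_{i,k}=p_{k,i}\ge S$, $q_{j,k}=q_{k,j}\ge S$ and $0\le r_{i,k}\le D$. Let $(x^{(1)},x^{(2)}):[0,\infty)\to\mathbb{R}^{N_1}\times\mathbb{R}^{N_2}$ be a $C^1$ solution of $$\frac{d}{dt}x^{(1)}_i=\alpha\sum_{k=1}^{N_1}p_{k,i}\bigl(x^{(1)}_k-x^{(1)}_i\bigr)-\alpha\sum_{k=1}^{N_2}r_{i,k}\bigl(x^{(2)}_k-x^{(1)}_i\bigr)+\delta x^{(1)}_i\bigl(1-(x^{(1)}_i)^2\bigr),$$ $$\frac{d}{dt}x^{(2)}_j=\alpha\sum_{k=1}^{N_2}q_{k,j}\bigl(x^{(2)}_k-x^{(2)}_j\bigr)-\alpha\sum_{k=1}^{N_1}r_{k,j}\bigl(x^{(1)}_k-x^{(2)}_j\bigr)+\delta x^{(2)}_j\bigl(1-(x^{(2)}_j)^2\bigr).$$ Then $$\frac{d}{dt}M_2=-\frac{\alpha}{N_1}\sum_{i,k=1}^{N_1}p_{k,i}(x^{(1)}_k-x^{(1)}_i)^2-\frac{2\alpha}{N_1}\sum_{k=1}^{N_2}\sum_{i=1}^{N_1}r_{i,k}(x^{(2)}_k-x^{(1)}_i)x^{(1)}_i+\frac{2\delta}{N_1}\sum_{i=1}^{N_1}(x^{(1)}_i)^2\bigl(1-(x^{(1)}_i)^2\bigr)$$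 $$\qquad-\frac{\alpha}{N_2}\sum_{j,k=1}^{N_2}q_{k,j}(x^{(2)}_k-x^{(2)}_j)^2-\frac{2\alpha}{N_2}\sum_{k=1}^{N_1}\sum_{j=1}^{N_2}r_{k,j}(x^{(1)}_k-x^{(2)}_j)x^{(2)}_j+\frac{2\delta}{N_2}\sum_{j=1}^{N_2}(x^{(2)}_j)^2\bigl(1-(x^{(2)}_j)^2\bigr),$$ and there exists a constant $M_2^\infty<\infty$ (depending only on $\alpha,\delta,D,N_1,N_2$ and $M_2(0)$) such that $\sup_{0\le t<\infty}M_2(t)\le M_2^\infty$.
   Context: This is the two-group form of the attractive–repulsive Allen–Cahn system $\frac{d}{dt}x_i=\alpha\sum_{j}(a_{i,j}-\beta_{i,j})(x_j-x_i)+\delta x_i(1-x_i^2)$ on $N=N_1+N_2$ nodes split into groups $\mathcal{I}_1$ (features $x^{(1)}_i$) and $\mathcal{I}_2$ (features $x^{(2)}_j$): within a group the coefficient $a_{i,j}-\beta_{i,j}$ is $p$ or $q$ (attraction, at least $S$), and between groups $a_{i,j}-\beta_{i,j}=-r$ (repulsion, of size at most $D$). Notation: $M_2(V)=\frac1{N_1}\sum_{i=1}^{N_1}(x^{(1)}_i)^2$, $M_2(W)=\frac1{N_2}\sum_{j=1}^{N_2}(x^{(2)}_j)^2$, $M_2=M_2(V)+M_2(W)$. *)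

(* Defs.v *)
From Stdlib Require Import Reals Lra.
From Coquelicot Require Import Coquelicot.
Open Scope R_scope.

(* fsum N f = f 0 + f 1 + ... + f (N-1)  (indices are 0-based). *)
Fixpoint fsum (N : nat) (f : nat -> R) : R :=
  match N with
  | O => 0
  | S n => fsum n f + f n
  end.

(* Derivative of f at t (t >= 0) relative to the domain [0, +oo):
   (f (t+h) - f t) / h --> l as h --> 0, h <> 0, t + h >= 0.
   For t > 0 this is the ordinary derivative, at t = 0 the right derivative. *)
Definition has_deriv_nonneg (f : R -> R) (t l : R) : Prop :=
  filterlim (fun h => (f (t + h) - f t) / h)
    (within (fun h => h <> 0 /\ 0 <= t + h) (locally 0)) (locally l).

Definition cont_nonneg (f : R -> R) (t : R) : Prop :=
  filterlim f (within (fun s => 0 <= s) (locally t)) (locally (f t)).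

Definition rhs1 (alpha delta : R) (N1 N2 : nat)
  (p r : nat -> nat -> R -> R) (x1 x2 : nat -> R -> R) (i : nat) (t : R) : R :=
  alpha * fsum N1 (fun k => p k i t * (x1 k t - x1 i t))
  - alpha * fsum N2 (fun k => r i k t * (x2 k t - x1 i t))
  + delta * x1 i t * (1 - (x1 i t)^2).

Definition rhs2 (alpha delta : R) (N1 N2 : nat)
  (q r : nat -> nat -> R -> R) (x1 x2 : nat -> R -> R) (j : nat) (t : R) : R :=
  alpha * fsum N2 (fun k => q k j t * (x2 k t - x2 j t))
  - alpha * fsum N1 (fun k => r k j t * (x1 k t - x2 j t))
  + delta * x2 j t * (1 - (x2 j t)^2).

Definition AR_system (alpha delta S D : R) (N1 N2 : nat)
  (p q r : nat -> nat -> R -> R) (x1 x2 : nat -> R -> R) : Prop :=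
  0 < alpha /\ 0 < delta /\ 0 <= S /\ 0 < D /\
  (1 <= N1)%nat /\ (1 <= N2)%nat /\
  (forall i k t, (i < N1)%nat -> (k < N1)%nat -> 0 <= t -> cont_nonneg (p i k) t) /\
  (forall j k t, (j < N2)%nat -> (k < N2)%nat -> 0 <= t -> cont_nonneg (q j k) t) /\
  (forall i k t, (i < N1)%nat -> (k < N2)%nat -> 0 <= t -> cont_nonneg (r i k) t) /\
  (forall i k t, (i < N1)%nat -> (k < N1)%nat -> 0 <= t -> p i k t = p k i t /\ S <= p i k t) /\
  (forall j k t, (j < N2)%nat -> (k < N2)%nat -> 0 <= t -> q j k t = q k j t /\ S <= q j k t) /\
  (forall i k t, (i < N1)%nat -> (k < N2)%nat -> 0 <= t -> 0 <= r i k t <= D) /\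
  (* C^1 solution on [0, +oo): derivatives given by the equations (continuous RHS) *)
  (forall i t, (i < N1)%nat -> 0 <= t ->
     has_deriv_nonneg (x1 i) t (rhs1 alpha delta N1 N2 p r x1 x2 i t)) /\
  (forall j t, (j < N2)%nat -> 0 <= t ->
     has_deriv_nonneg (x2 j) t (rhs2 alpha delta N1 N2 q r x1 x2 j t)).

Definition M2 (N1 N2 : nat) (x1 x2 : nat -> R -> R) (t : R) : R :=
  / INR N1 * fsum N1 (fun i => (x1 i t)^2) + / INR N2 * fsum N2 (fun j => (x2 j t)^2).

Definition dM2 (alpha delta : R) (N1 N2 : nat)
  (p q r : nat -> nat -> R -> R) (x1 x2 : nat -> R -> R) (t : R) : R :=
  - alpha / INR N1 * fsum N1 (fun i => fsum N1 (fun k => p k i t * (x1 k t - x1 i t)^2))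
  - 2 * alpha / INR N1 * fsum N2 (fun k => fsum N1 (fun i => r i k t * (x2 k t - x1 i t) * x1 i t))
  + 2 * delta / INR N1 * fsum N1 (fun i => (x1 i t)^2 * (1 - (x1 i t)^2))
  - alpha / INR N2 * fsum N2 (fun j => fsum N2 (fun k => q k j t * (x2 k t - x2 j t)^2))
  - 2 * alpha / INR N2 * fsum N1 (fun k => fsum N2 (fun j => r k j t * (x1 k t - x2 j t) * x2 j t))
  + 2 * delta / INR N2 * fsum N2 (fun j => (x2 j t)^2 * (1 - (x2 j t)^2)).

(* Main.v *)
Require Import Defs.
From Stdlib Require Import Reals Lra Lia.
From Coquelicot Require Import Coquelicot.
Open Scope R_scope.

Definition FF (t : R) := within (fun h => h <> 0 /\ 0 <= t + h) (locally 0).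

Lemma FF_filter t : Filter (FF t).
Proof. apply within_filter. apply locally_filter. Qed.

Lemma ev_FF t (P : R -> Prop) : (forall h, h <> 0 -> P h) -> FF t P.
Proof.
  intros H. exists (mkposreal 1 Rlt_0_1). intros y _ [Hy _]. auto.
Qed.

Lemma FF_id t : filterlim (fun h => h) (FF t) (locally 0).
Proof.
  intros P HP. unfold filtermap, FF, within.
  eapply filter_imp; [|exact HP]. simpl. auto.
Qed.

Lemma hd_ext f g t l : (forall s, f s = g s) -> has_deriv_nonneg f t l -> has_deriv_nonneg g t l.
Proof.
  unfold has_deriv_nonneg. intros E H.
  eapply filterlim_ext; [|exact H]. intros h. simpl. rewrite !E. reflexivity.
Qed.

Lemma hd_const c t : has_deriv_nonneg (fun _ => c) t 0.
Proof.
  unfold has_deriv_nonneg.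
  eapply filterlim_ext; [|apply filterlim_const].
  intros h. simpl. unfold Rdiv. ring.
Qed.

Lemma hd_plus f g t a b : has_deriv_nonneg f t a -> has_deriv_nonneg g t b ->
  has_deriv_nonneg (fun s => f s + g s) t (a + b).
Proof.
  unfold has_deriv_nonneg. intros Hf Hg.
  pose proof (FF_filter t) as FFt. unfold FF in FFt.
  eapply filterlim_ext_loc.
  2:{ exact (filterlim_comp_2 _ _ Rplus Hf Hg (filterlim_plus a b)). }
  apply (ev_FF t). intros h Hh. simpl. field. exact Hh.
Qed.

Lemma hd_cont g t b : has_deriv_nonneg g t b ->
  filterlim (fun h => g (t + h)) (FF t) (locally (g t)).
Proof.
  intros Hg.
  unfold has_deriv_nonneg in Hg.
  pose proof (FF_filter t) as FFt. unfold FF in *.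
    assert (H1 : filterlim (fun h => g t + h * ((g (t + h) - g t) / h))
        (within (fun h => h <> 0 /\ 0 <= t + h) (locally 0)) (locally (g t + 0 * b))).
    { eapply (filterlim_comp_2 _ _ Rplus (filterlim_const (g t))).
      - eapply (filterlim_comp_2 _ _ Rmult (FF_id t) Hg (filterlim_mult 0 b)).
      - apply (filterlim_plus (g t) (0 * b)). }
    rewrite Rmult_0_l, Rplus_0_r in H1.
    eapply filterlim_ext_loc; [|exact H1].
    apply (ev_FF t). intros h Hh. field. exact Hh.
Qed.

Lemma hd_mult f g t a b : has_deriv_nonneg f t a -> has_deriv_nonneg g t b ->
  has_deriv_nonneg (fun s => f s * g s) t (a * g t + f t * b).
Proof.
  unfold has_deriv_nonneg. intros Hf Hg.
  pose proof (FF_filter t) as FFt. unfold FF in FFt.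
  pose proof (hd_cont g t b Hg) as Hc. unfold FF in Hc.
  eapply filterlim_ext_loc.
  2:{ eapply (filterlim_comp_2 _ _ Rplus).
      - eapply (filterlim_comp_2 _ _ Rmult Hf Hc (filterlim_mult a (g t))).
      - eapply (filterlim_comp_2 _ _ Rmult (filterlim_const (f t)) Hg (filterlim_mult (f t) b)).
      - apply (filterlim_plus (a * g t) (f t * b)). }
  apply (ev_FF t). intros h Hh. simpl. field. exact Hh.
Qed.

Lemma hd_scal c f t a : has_deriv_nonneg f t a -> has_deriv_nonneg (fun s => c * f s) t (c * a).
Proof.
  intros H. pose proof (hd_mult (fun _ => c) f t 0 a (hd_const c t) H) as H2.
  replace (c * a) with (0 * f t + c * a) by ring. exact H2.
Qed.

Lemma hd_of_derivable f t l : derivable_pt_lim f t l -> has_deriv_nonneg f t l.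
Proof.
  intros H P [eps HP]. destruct (H eps (cond_pos eps)) as [d Hd].
  exists d. intros y Hy [Hy0 _]. apply HP. apply Hd; auto.
  change (Rabs (y - 0) < d) in Hy. rewrite Rminus_0_r in Hy. exact Hy.
Qed.

Lemma derivable_of_hd f t l : 0 < t -> has_deriv_nonneg f t l -> derivable_pt_lim f t l.
Proof.
  intros Ht H eps Heps.
  destruct (H (ball l (mkposreal eps Heps)) (locally_ball _ _)) as [d Hd].
  assert (Hm : 0 < Rmin d t) by (apply Rmin_pos; [apply cond_pos|exact Ht]).
  exists (mkposreal _ Hm). intros h Hh0 Hh. simpl in Hh.
  apply (Hd h).
  - change (Rabs (h - 0) < d). rewrite Rminus_0_r. eapply Rlt_le_trans; [exact Hh|apply Rmin_l].
  - split; auto. assert (Rabs h < t) by (eapply Rlt_le_trans; [exact Hh|apply Rmin_r]).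
    apply Rabs_def2 in H0. lra.
Qed.

Lemma hd_fsum N (f : nat -> R -> R) (l : nat -> R) t :
  (forall i, (i < N)%nat -> has_deriv_nonneg (f i) t (l i)) ->
  has_deriv_nonneg (fun s => fsum N (fun i => f i s)) t (fsum N l).
Proof.
  induction N as [|N IH]; intros H; simpl.
  - apply hd_const.
  - apply hd_plus; [apply IH; intros; apply H; lia| apply H; lia].
Qed.

Lemma hd_sq f t a : has_deriv_nonneg f t a -> has_deriv_nonneg (fun s => (f s)^2) t (2 * f t * a).
Proof.
  intros H. pose proof (hd_mult f f t a a H H) as H2.
  replace (2 * f t * a) with (a * f t + f t * a) by ring.
  eapply hd_ext; [|exact H2]. intros s; simpl; ring.
Qed.

Lemma fsum_ext N f g : (forall i, (i < N)%nat -> f i = g i) -> fsum N f = fsum N g.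
Proof. induction N; intros H; simpl; auto. rewrite IHN, H; auto; intros; apply H; lia. Qed.

Lemma fsum_le N f g : (forall i, (i < N)%nat -> f i <= g i) -> fsum N f <= fsum N g.
Proof. induction N; intros H; simpl; [lra|]. apply Rplus_le_compat; [apply IHN; intros; apply H; lia|apply H; lia]. Qed.

Lemma fsum_lin2 N c1 c2 f g : fsum N (fun i => c1 * f i + c2 * g i) = c1 * fsum N f + c2 * fsum N g.
Proof. induction N; simpl; [ring|]. rewrite IHN; ring. Qed.

Lemma fsum_affine N c1 c2 f : fsum N (fun i => c1 * f i + c2) = c1 * fsum N f + INR N * c2.
Proof. induction N; simpl fsum; [simpl; ring|]. rewrite IHN, S_INR; ring. Qed.

Lemma fsum_scal_r N f c : fsum N (fun i => f i * c) = fsum N f * c.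
Proof. induction N; simpl; [ring|]. rewrite IHN; ring. Qed.

Lemma fsum_plus N f g : fsum N (fun i => f i + g i) = fsum N f + fsum N g.
Proof. induction N; simpl; [ring|]. rewrite IHN; ring. Qed.

Lemma fsum_swap N M (f : nat -> nat -> R) :
  fsum N (fun i => fsum M (fun k => f i k)) = fsum M (fun k => fsum N (fun i => f i k)).
Proof.
  induction N; simpl.
  - induction M; simpl; [ring|]. rewrite <- IHM; ring.
  - rewrite IHN. clear IHN. rewrite fsum_plus. reflexivity.
Qed.

Lemma fsum_nonneg N f : (forall i, (i < N)%nat -> 0 <= f i) -> 0 <= fsum N f.
Proof. intros H. replace 0 with (fsum N (fun _ => 0)). apply fsum_le; auto.
  clear H; induction N; simpl; auto; rewrite IHN; ring. Qed.

Lemma fsum_sym N (p : nat -> nat -> R) (a : nat -> R) :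
  (forall i k, (i < N)%nat -> (k < N)%nat -> p i k = p k i) ->
  fsum N (fun i => fsum N (fun k => p k i * (a k - a i)^2)) =
  -2 * fsum N (fun i => fsum N (fun k => p k i * (a k - a i) * a i)).
Proof.
  intros Hs.
  set (P := fsum N (fun i => fsum N (fun k => p k i * (a k - a i) * a i))).
  assert (E1 : P = fsum N (fun i => fsum N (fun k => p k i * (a i - a k) * a k))).
  { unfold P. rewrite fsum_swap. apply fsum_ext; intros i Hi. apply fsum_ext; intros k Hk.
    rewrite (Hs i k); auto. }
  transitivity (fsum N (fun i => (-1) * fsum N (fun k => p k i * (a k - a i) * a i)
                    + (-1) * fsum N (fun k => p k i * (a i - a k) * a k))).
  { apply fsum_ext; intros i Hi. rewrite <- fsum_lin2. apply fsum_ext; intros k Hk. ring. }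
  rewrite fsum_lin2. rewrite <- E1. fold P. ring.
Qed.

Lemma fsum_lin3 N c1 c2 c3 f g h : fsum N (fun i => c1 * f i + c2 * g i + c3 * h i) = c1 * fsum N f + c2 * fsum N g + c3 * fsum N h.
Proof. induction N; simpl; [ring|]. rewrite IHN; ring. Qed.

Lemma sum_rhs1 alpha delta N1 N2 p r x1 x2 t :
  fsum N1 (fun i => 2 * x1 i t * rhs1 alpha delta N1 N2 p r x1 x2 i t) =
  2 * alpha * fsum N1 (fun i => fsum N1 (fun k => p k i t * (x1 k t - x1 i t) * x1 i t))
  + (- 2 * alpha) * fsum N1 (fun i => fsum N2 (fun k => r i k t * (x2 k t - x1 i t) * x1 i t))
  + 2 * delta * fsum N1 (fun i => x1 i t ^ 2 * (1 - x1 i t ^ 2)).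
Proof.
  rewrite <- fsum_lin3. apply fsum_ext; intros i Hi. unfold rhs1.
  assert (E1 : fsum N1 (fun k => p k i t * (x1 k t - x1 i t) * x1 i t) = fsum N1 (fun k => p k i t * (x1 k t - x1 i t)) * x1 i t) by apply fsum_scal_r.
  assert (E2 : fsum N2 (fun k => r i k t * (x2 k t - x1 i t) * x1 i t) = fsum N2 (fun k => r i k t * (x2 k t - x1 i t)) * x1 i t) by apply fsum_scal_r.
  rewrite E1, E2. ring.
Qed.

Lemma sum_rhs2 alpha delta N1 N2 q r x1 x2 t :
  fsum N2 (fun j => 2 * x2 j t * rhs2 alpha delta N1 N2 q r x1 x2 j t) =
  2 * alpha * fsum N2 (fun j => fsum N2 (fun k => q k j t * (x2 k t - x2 j t) * x2 j t))
  + (- 2 * alpha) * fsum N2 (fun j => fsum N1 (fun k => r k j t * (x1 k t - x2 j t) * x2 j t))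
  + 2 * delta * fsum N2 (fun j => x2 j t ^ 2 * (1 - x2 j t ^ 2)).
Proof.
  rewrite <- fsum_lin3. apply fsum_ext; intros j Hj. unfold rhs2.
  assert (E1 : fsum N2 (fun k => q k j t * (x2 k t - x2 j t) * x2 j t) = fsum N2 (fun k => q k j t * (x2 k t - x2 j t)) * x2 j t) by apply fsum_scal_r.
  assert (E2 : fsum N1 (fun k => r k j t * (x1 k t - x2 j t) * x2 j t) = fsum N1 (fun k => r k j t * (x1 k t - x2 j t)) * x2 j t) by apply fsum_scal_r.
  rewrite E1, E2. ring.
Qed.

Lemma part1 alpha delta S D N1 N2 p q r x1 x2 :
  AR_system alpha delta S D N1 N2 p q r x1 x2 ->
  forall t, 0 <= t -> has_deriv_nonneg (M2 N1 N2 x1 x2) t (dM2 alpha delta N1 N2 p q r x1 x2 t).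
Proof.
  intros (Ha & Hd & HS & HD & HN1 & HN2 & _ & _ & _ & Hp & Hq & Hr & Hx1 & Hx2) t Ht.
  assert (H1 : has_deriv_nonneg (fun s => fsum N1 (fun i => (x1 i s)^2)) t
     (fsum N1 (fun i => 2 * x1 i t * rhs1 alpha delta N1 N2 p r x1 x2 i t))).
  { apply (hd_fsum N1 (fun i s => (x1 i s)^2)). intros i Hi. apply hd_sq. apply Hx1; auto. }
  assert (H2 : has_deriv_nonneg (fun s => fsum N2 (fun j => (x2 j s)^2)) t
     (fsum N2 (fun j => 2 * x2 j t * rhs2 alpha delta N1 N2 q r x1 x2 j t))).
  { apply (hd_fsum N2 (fun j s => (x2 j s)^2)). intros j Hj. apply hd_sq. apply Hx2; auto. }
  pose proof (hd_plus _ _ t _ _ (hd_scal (/ INR N1) _ t _ H1) (hd_scal (/ INR N2) _ t _ H2)) as H.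
  unfold M2. eapply hd_ext; [intros s; reflexivity|].
  replace (dM2 alpha delta N1 N2 p q r x1 x2 t) with
    (/ INR N1 * fsum N1 (fun i => 2 * x1 i t * rhs1 alpha delta N1 N2 p r x1 x2 i t) +
     / INR N2 * fsum N2 (fun j => 2 * x2 j t * rhs2 alpha delta N1 N2 q r x1 x2 j t)); [exact H|].
  rewrite sum_rhs1, sum_rhs2. unfold dM2.
  rewrite (fsum_sym N1 (fun i k => p i k t) (fun k => x1 k t)).
  2:{ intros i k Hi Hk. apply Hp; auto. }
  rewrite (fsum_sym N2 (fun i k => q i k t) (fun k => x2 k t)).
  2:{ intros i k Hi Hk. apply Hq; auto. }
  rewrite (fsum_swap N2 N1 (fun k i => r i k t * (x2 k t - x1 i t) * x1 i t)).
  rewrite (fsum_swap N1 N2 (fun k j => r k j t * (x1 k t - x2 j t) * x2 j t)).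
  unfold Rdiv. ring.
Qed.

Lemma compare (f l : R -> R) K :
  (forall t, 0 <= t -> has_deriv_nonneg f t (l t)) ->
  (forall t, 0 <= t -> l t <= K - f t) ->
  forall t, 0 <= t -> f t <= Rmax (f 0) K.
Proof.
  intros Hf Hl.
  set (h := fun s => exp s * (f s - K)).
  set (dh := fun s => exp s * (f s - K) + exp s * (l s + 0)).
  assert (Hh : forall s, 0 <= s -> has_deriv_nonneg h s (dh s)).
  { intros s Hs. unfold h, dh. apply (hd_mult exp (fun x => f x - K) s (exp s) (l s + 0)).
    - apply hd_of_derivable. apply is_derive_Reals. apply is_derive_exp.
    - eapply hd_ext; [|apply (hd_plus f (fun _ => -K) s (l s) 0); [apply Hf; auto|apply hd_const]].
      intros x; simpl; ring. }
  assert (Hdh : forall s, 0 <= s -> dh s <= 0).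
  { intros s Hs. unfold dh. pose proof (Hl s Hs). pose proof (exp_pos s).
    assert (0 <= exp s * (K - f s - l s)) by (apply Rmult_le_pos; lra). nra. }
  assert (HA : forall s u, 0 < s -> s < u -> h u <= h s).
  { intros s u Hs Hsu. destruct (Rle_lt_dec (h u) (h s)) as [|Hlt]; auto. exfalso.
    set (eps := (h u - h s) / (2 * (u - s))).
    assert (Heps : 0 < eps) by (unfold eps; apply Rdiv_lt_0_compat; lra).
    set (g := fun x => eps * x + (-1) * h x).
    assert (Hg : g s < g u).
    { apply (incr_function g (Finite 0) p_infty (fun x => eps * 1 + (-1) * dh x)).
      - intros x Hx _. simpl in Hx. apply is_derive_Reals. apply derivable_of_hd; auto.
        unfold g. apply hd_plus; apply hd_scal.
        + apply hd_of_derivable. apply derivable_pt_lim_id.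
        + apply Hh. lra.
      - intros x Hx _. simpl in Hx. pose proof (Hdh x ltac:(lra)). lra.
      - simpl; auto.
      - exact Hsu.
      - simpl; auto. }
    unfold g in Hg.
    assert (eps * (u - s) = (h u - h s) / 2) by (unfold eps; field; lra). nra. }
  assert (HB : forall u, 0 < u -> h u <= h 0).
  { intros u Hu. destruct (Rle_lt_dec (h u) (h 0)) as [|Hlt]; auto. exfalso.
    assert (He : 0 < h u - h 0) by lra.
    pose proof (hd_cont h 0 (dh 0) (Hh 0 (Rle_refl 0))) as Hc.
    destruct (Hc (ball (h 0) (mkposreal _ He)) (locally_ball _ _)) as [d Hd].
    set (y := Rmin (d / 2) (u / 2)).
    assert (Hy0 : 0 < y) by (apply Rmin_pos; pose proof (cond_pos d); lra).
    assert (Hy1 : y <= d / 2) by apply Rmin_l.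
    assert (Hy2 : y <= u / 2) by apply Rmin_r.
    assert (Hb : ball (h 0) (h u - h 0) (h (0 + y))).
    { apply (Hd y).
      - change (Rabs (y - 0) < d). rewrite Rminus_0_r, Rabs_right by lra. pose proof (cond_pos d); lra.
      - split; lra. }
    change (Rabs (h (0 + y) - h 0) < h u - h 0) in Hb. rewrite Rplus_0_l in Hb.
    apply Rabs_def2 in Hb. pose proof (HA y u Hy0 ltac:(lra)). lra. }
  intros t Ht. destruct (Rle_lt_dec (f t) K) as [HK|HK].
  { eapply Rle_trans; [exact HK|apply Rmax_r]. }
  destruct (Req_dec t 0) as [->|Ht0]. { apply Rmax_l. }
  pose proof (HB t ltac:(lra)) as HBt. unfold h in HBt. rewrite exp_0 in HBt.
  assert (1 <= exp t). { pose proof (exp_ineq1_le t). lra. }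
  assert (f t - K <= exp t * (f t - K)) by nra.
  eapply Rle_trans; [|apply Rmax_l]. lra.
Qed.

Lemma fsum_opp N f : - fsum N f = fsum N (fun i => - f i).
Proof. induction N; simpl; [ring|]. rewrite <- IHN; ring. Qed.

Lemma cross No Ni (w : nat -> nat -> R) (a b : nat -> R) D :
  (forall o n, (o < No)%nat -> (n < Ni)%nat -> 0 <= w o n <= D) ->
  - fsum No (fun o => fsum Ni (fun n => w o n * (b o - a n) * a n)) <=
  INR Ni * (1/2 * D) * fsum No (fun o => b o ^ 2) + INR No * (3/2 * D * fsum Ni (fun n => a n ^ 2)).
Proof.
  intros Hw. rewrite fsum_opp.
  eapply Rle_trans.
  { apply (fsum_le No _ (fun o => fsum Ni (fun n => (3/2*D) * (a n ^ 2) + (1/2*D*b o ^ 2)))).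
    intros o Ho. rewrite fsum_opp. apply fsum_le. intros n Hn.
    destruct (Hw o n Ho Hn) as [H0 H1].
    assert (0 <= (a n + b o)^2) by (apply pow2_ge_0).
    assert (X : - (w o n * (b o - a n) * a n) <= w o n * (3/2 * a n ^2 + 1/2 * b o ^2)).
    { assert (0 <= w o n * ((a n + b o)^2)) by (apply Rmult_le_pos; auto). nra. }
    assert (0 <= 3/2 * a n ^2 + 1/2 * b o ^2) by (pose proof (pow2_ge_0 (a n)); pose proof (pow2_ge_0 (b o)); lra).
    assert (w o n * (3/2 * a n ^2 + 1/2 * b o ^2) <= D * (3/2 * a n ^2 + 1/2 * b o ^2)) by (apply Rmult_le_compat_r; auto).
    lra. }
  rewrite (fsum_ext No _ (fun o => (INR Ni * (1/2 * D)) * b o ^ 2 + 3/2 * D * fsum Ni (fun n => a n ^ 2))).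
  - rewrite fsum_affine. lra.
  - intros o Ho. rewrite (fsum_affine Ni (3/2*D) (1/2*D*b o ^ 2) (fun n => a n ^ 2)). ring.
Qed.

Lemma fsum_const N c : fsum N (fun _ => c) = INR N * c.
Proof. induction N; simpl fsum; [simpl; ring|]. rewrite IHN, S_INR; ring. Qed.

Lemma quart N c e (a : nat -> R) : 0 < e ->
  c * fsum N (fun i => a i ^ 2) + e * fsum N (fun i => a i ^ 2 * (1 - a i ^ 2)) <=
  INR N * ((c + e) ^ 2 / (4 * e)).
Proof.
  intros He. rewrite <- fsum_lin2.
  replace (INR N * ((c + e) ^ 2 / (4 * e))) with (fsum N (fun _ => (c + e) ^ 2 / (4 * e))).
  2:{ apply fsum_const. }
  apply fsum_le. intros i _. set (y := a i ^ 2).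
  assert (E : (c + e) ^ 2 / (4 * e) - (c * y + e * (y * (1 - y))) = (c + e - 2 * e * y) ^ 2 / (4 * e)) by (field; lra).
  assert (0 <= (c + e - 2 * e * y) ^ 2 / (4 * e)).
  { apply Rmult_le_pos; [apply pow2_ge_0|]. left; apply Rinv_0_lt_compat; lra. }
  lra.
Qed.

Definition Kc (alpha delta D : R) (N1 N2 : nat) : R :=
  let n1 := INR N1 in let n2 := INR N2 in
  let c1 := 2 * alpha / n1 * (INR N2 * (3/2 * D)) + 2 * alpha / n2 * (INR N2 * (1/2 * D)) + / n1 in
  let c2 := 2 * alpha / n2 * (INR N1 * (3/2 * D)) + 2 * alpha / n1 * (INR N1 * (1/2 * D)) + / n2 in
  let e1 := 2 * delta / n1 in let e2 := 2 * delta / n2 in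
  INR N1 * ((c1 + e1) ^ 2 / (4 * e1)) + INR N2 * ((c2 + e2) ^ 2 / (4 * e2)).

Lemma bound alpha delta S D N1 N2 p q r x1 x2 :
  AR_system alpha delta S D N1 N2 p q r x1 x2 ->
  forall t, 0 <= t -> dM2 alpha delta N1 N2 p q r x1 x2 t <= Kc alpha delta D N1 N2 - M2 N1 N2 x1 x2 t.
Proof.
  intros (Ha & Hd & HS & HD & HN1 & HN2 & _ & _ & _ & Hp & Hq & Hr & _ & _) t Ht.
  assert (n1p : 0 < INR N1) by (apply lt_0_INR; lia).
  assert (n2p : 0 < INR N2) by (apply lt_0_INR; lia).
  pose proof (cross N2 N1 (fun o n => r n o t) (fun n => x1 n t) (fun o => x2 o t) D) as C1.
  pose proof (cross N1 N2 (fun o n => r o n t) (fun n => x2 n t) (fun o => x1 o t) D) as C2.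
  cbv beta in C1, C2.
  specialize (C1 ltac:(intros; apply Hr; auto)).
  specialize (C2 ltac:(intros; apply Hr; auto)).
  assert (P1 : 0 <= fsum N1 (fun i => fsum N1 (fun k => p k i t * (x1 k t - x1 i t)^2))).
  { apply fsum_nonneg; intros i Hi; apply fsum_nonneg; intros k Hk.
    apply Rmult_le_pos; [destruct (Hp k i t Hk Hi Ht); lra|apply pow2_ge_0]. }
  assert (P2 : 0 <= fsum N2 (fun i => fsum N2 (fun k => q k i t * (x2 k t - x2 i t)^2))).
  { apply fsum_nonneg; intros i Hi; apply fsum_nonneg; intros k Hk.
    apply Rmult_le_pos; [destruct (Hq k i t Hk Hi Ht); lra|apply pow2_ge_0]. }
  set (n1 := INR N1) in *. set (n2 := INR N2) in *.
  set (c1 := 2 * alpha / n1 * (n2 * (3/2 * D)) + 2 * alpha / n2 * (n2 * (1/2 * D)) + / n1).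
  set (c2 := 2 * alpha / n2 * (n1 * (3/2 * D)) + 2 * alpha / n1 * (n1 * (1/2 * D)) + / n2).
  assert (e1p : 0 < 2 * delta / n1) by (apply Rdiv_lt_0_compat; lra).
  assert (e2p : 0 < 2 * delta / n2) by (apply Rdiv_lt_0_compat; lra).
  pose proof (quart N1 c1 (2 * delta / n1) (fun i => x1 i t) e1p) as Q1.
  pose proof (quart N2 c2 (2 * delta / n2) (fun i => x2 i t) e2p) as Q2.
  cbv beta in Q1, Q2.
  assert (Kc alpha delta D N1 N2 = n1 * ((c1 + 2 * delta / n1) ^ 2 / (4 * (2 * delta / n1))) + n2 * ((c2 + 2 * delta / n2) ^ 2 / (4 * (2 * delta / n2)))) as EK by reflexivity.
  rewrite EK. unfold dM2, M2. fold n1 n2.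
  set (SA := fsum N1 (fun i => x1 i t ^ 2)) in *.
  set (SB := fsum N2 (fun i => x2 i t ^ 2)) in *.
  set (R1 := fsum N2 (fun k => fsum N1 (fun i => r i k t * (x2 k t - x1 i t) * x1 i t))) in *.
  set (R2 := fsum N1 (fun k => fsum N2 (fun j => r k j t * (x1 k t - x2 j t) * x2 j t))) in *.
  set (Ps1 := fsum N1 (fun i => fsum N1 (fun k => p k i t * (x1 k t - x1 i t)^2))) in *.
  set (Ps2 := fsum N2 (fun i => fsum N2 (fun k => q k i t * (x2 k t - x2 i t)^2))) in *.
  set (Qa := fsum N1 (fun i => x1 i t ^ 2 * (1 - x1 i t ^ 2))) in *.
  set (Qb := fsum N2 (fun i => x2 i t ^ 2 * (1 - x2 i t ^ 2))) in *.
  assert (A1 : 0 <= alpha / n1 * Ps1) by (apply Rmult_le_pos; [left; apply Rdiv_lt_0_compat|]; lra).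
  assert (A2 : 0 <= alpha / n2 * Ps2) by (apply Rmult_le_pos; [left; apply Rdiv_lt_0_compat|]; lra).
  assert (B1 : 2 * alpha / n1 * (- R1) <= 2 * alpha / n1 * (n1 * (1/2 * D) * SB + n2 * (3/2 * D * SA)))
    by (apply Rmult_le_compat_l; [left; apply Rdiv_lt_0_compat|]; lra).
  assert (B2 : 2 * alpha / n2 * (- R2) <= 2 * alpha / n2 * (n2 * (1/2 * D) * SA + n1 * (3/2 * D * SB)))
    by (apply Rmult_le_compat_l; [left; apply Rdiv_lt_0_compat|]; lra).
  change (INR N1) with n1 in Q1. change (INR N2) with n2 in Q2.
  unfold Rdiv in *.
  set (K1 := (c1 + 2 * delta * / n1) ^ 2 * / (4 * (2 * delta * / n1))) in *.
  set (K2 := (c2 + 2 * delta * / n2) ^ 2 * / (4 * (2 * delta * / n2))) in *.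
  assert (Ec1 : c1 * SA = 2*alpha*/n1*(n2*(3*/2*D))*SA + 2*alpha*/n2*(n2*(1*/2*D))*SA + /n1*SA) by (unfold c1; unfold Rdiv; ring).
  assert (Ec2 : c2 * SB = 2*alpha*/n2*(n1*(3*/2*D))*SB + 2*alpha*/n1*(n1*(1*/2*D))*SB + /n2*SB) by (unfold c2; unfold Rdiv; ring).
  lra.
Qed.

Theorem lemma2p1 :
  (forall (alpha delta S D : R) (N1 N2 : nat)
          (p q r : nat -> nat -> R -> R) (x1 x2 : nat -> R -> R),
     AR_system alpha delta S D N1 N2 p q r x1 x2 ->
     forall t, 0 <= t ->
       has_deriv_nonneg (M2 N1 N2 x1 x2) t (dM2 alpha delta N1 N2 p q r x1 x2 t))
  /\
  (exists Minf : R -> R -> R -> nat -> nat -> R -> R,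
     forall (alpha delta S D : R) (N1 N2 : nat)
            (p q r : nat -> nat -> R -> R) (x1 x2 : nat -> R -> R),
       AR_system alpha delta S D N1 N2 p q r x1 x2 ->
       forall t, 0 <= t ->
         M2 N1 N2 x1 x2 t <= Minf alpha delta D N1 N2 (M2 N1 N2 x1 x2 0)).
Proof.
  split.
  - exact part1.
  - exists (fun alpha delta D N1 N2 M0 => Rmax M0 (Kc alpha delta D N1 N2)).
    intros alpha delta S D N1 N2 p q r x1 x2 H t Ht.
    apply (compare (M2 N1 N2 x1 x2) (dM2 alpha delta N1 N2 p q r x1 x2)).
    + apply (part1 _ _ _ _ _ _ _ _ _ _ _ H).
    + apply (bound _ _ _ _ _ _ _ _ _ _ _ H).
    + exact Ht.
Qed.
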